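(* Let $k_{ON},k_{OFF},k_I,\alpha_{p_1},\alpha_{p_2},\gamma_{p_1},\gamma_{m_2},\alpha_{m_2,I},\beta_{m_2,A},T_c>0$, $v_b>1$, $n\ge 1$, and set $a_1=k_{ON}$, $a_3=k_{ON}+k_{OFF}$, $a_4=k_I$, $a_5=\alpha_{p_1}$, $a_6=\gamma_{p_1}$, $a_7=\alpha_{m_2,I}$, $a_8=\gamma_{m_2}+\alpha_{p_1}+\alpha_{p_2}$, $a_9=\beta_{m_2,A}/v_b$, $a_{10}=v_b/T_c^n$, $a_{11}=1/T_c^n$. Consider the quasi-steady-state system \[ \begin{aligned} x' &= a_1 + (a_4-a_1)y - \Big(a_3 + a_9\frac{1+a_{10}v^n}{1+a_{11}v^n}\Big)x,\\ y' &= a_9\frac{1+a_{10}v^n}{1+a_{11}v^n}x - a_4 y,\\ v' &= a_5\frac{a_7}{a_8}x - a_6 v. \end{aligned} \] Then its positive steady state $(x^*,y^*,v^* )$ (all components positive) is locally asymptotically stable.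
   Context: Here $x=\mathrm{LTR}_I$, $y=\mathrm{LTR}_A$, $v=\mathrm{Tat}$ in a model of HIV-1 transcription (with $\mathrm{LTR}_R=1-x-y$), obtained by replacing $\mathrm{env}_I$ with its quasi-steady-state value $\frac{a_7}{a_8}x$. *)

(* Defs.v *)
From Stdlib Require Import Reals.
From Coquelicot Require Import Coquelicot.
Open Scope R_scope.

Definition hill (a10 a11 : R) (n : nat) (v : R) : R :=
  (1 + a10 * v ^ n) / (1 + a11 * v ^ n).

Definition Fx (a1 a3 a4 a9 a10 a11 : R) (n : nat) (x y v : R) : R :=
  a1 + (a4 - a1) * y - (a3 + a9 * hill a10 a11 n v) * x.
Definition Fy (a4 a9 a10 a11 : R) (n : nat) (x y v : R) : R :=
  a9 * hill a10 a11 n v * x - a4 * y.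
Definition Fv (a5 a6 a7 a8 : R) (x y v : R) : R :=
  a5 * (a7 / a8) * x - a6 * v.

Definition is_sol (fx fy fv : R -> R -> R -> R) (x y v : R -> R) : Prop :=
  (forall t, 0 < t ->
      is_derive x t (fx (x t) (y t) (v t)) /\
      is_derive y t (fy (x t) (y t) (v t)) /\
      is_derive v t (fv (x t) (y t) (v t))) /\
  filterlim x (at_right 0) (locally (x 0)) /\
  filterlim y (at_right 0) (locally (y 0)) /\
  filterlim v (at_right 0) (locally (v 0)).

Definition dist3 (x y v xs ys vs : R) : R :=
  sqrt ((x - xs) ^ 2 + (y - ys) ^ 2 + (v - vs) ^ 2).

Definition loc_asym_stable (fx fy fv : R -> R -> R -> R) (xs ys vs : R) : Prop :=
  (forall eps, 0 < eps -> exists delta, 0 < delta /\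
     forall x y v, is_sol fx fy fv x y v ->
       dist3 (x 0) (y 0) (v 0) xs ys vs < delta ->
       forall t, 0 <= t -> dist3 (x t) (y t) (v t) xs ys vs < eps) /\
  (exists delta, 0 < delta /\
     forall x y v, is_sol fx fy fv x y v ->
       dist3 (x 0) (y 0) (v 0) xs ys vs < delta ->
       forall eps, 0 < eps -> exists T, forall t, T <= t ->
         dist3 (x t) (y t) (v t) xs ys vs < eps).

(* Main.v *)
From Stdlib Require Import Reals Lra Psatz.
From Coquelicot Require Import Coquelicot.
Require Import Defs.
Open Scope R_scope.

Lemma is_derive_eq (f : R -> R) t l l' : is_derive f t l -> l = l' -> is_derive f t l'.
Proof. intros; subst; auto. Qed.

Lemma hill_pos a10 a11 n v : 0 < a10 -> 0 < a11 -> 0 <= v -> 0 < hill a10 a11 n v.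
Proof. intros. unfold hill. assert (0 <= v ^ n) by (apply pow_le; lra).
  apply Rdiv_lt_0_compat; nra. Qed.

Lemma exist_eq (a1 a3 a4 a9 a10 a11 kv : R) (n : nat) :
  0 < a1 -> a1 < a3 -> 0 < a4 -> 0 < a9 -> 0 < a10 -> 0 < a11 -> 0 < kv ->
  exists xs, 0 < xs /\ xs = a1 / (a3 + a1 * (a9 * hill a10 a11 n (kv * xs)) / a4).
Proof.
  intros.
  set (f := fun x => x - a1 / (a3 + a1 * (a9 * hill a10 a11 n (kv * x)) / a4)).
  assert (Hc : forall x, 0 <= x <= a1/a3 -> continuity_pt f x).
  { intros x Hx. apply continuity_pt_filterlim. apply (ex_derive_continuous (K:=R_AbsRing) (V:=R_NormedModule) f).
    unfold f, hill.
    assert (0 <= (kv*x)^n) by (apply pow_le; nra).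
    assert (0 < (1 + a10 * (kv * x) ^ n) / (1 + a11 * (kv * x) ^ n)) by (apply Rdiv_lt_0_compat; nra).
    auto_derive. repeat split; try nra.
    assert (0 < a1 * (a9 * ((1 + a10 * (kv * x) ^ n) / (1 + a11 * (kv * x) ^ n))) / a4).
    { apply Rdiv_lt_0_compat; try nra. apply Rmult_lt_0_compat; nra. }
    nra. }
  assert (Ha3 : 0 < a1 / a3) by (apply Rdiv_lt_0_compat; lra).
  assert (Hg : forall x, 0 <= x -> 0 < a1 * (a9 * hill a10 a11 n (kv * x)) / a4).
  { intros x Hx. apply Rdiv_lt_0_compat; try lra. apply Rmult_lt_0_compat; try lra.
    apply Rmult_lt_0_compat; try lra. apply hill_pos; nra. }
  assert (Hf0 : f 0 < 0).
  { unfold f. specialize (Hg 0 (Rle_refl 0)).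
    assert (0 < a1 / (a3 + a1 * (a9 * hill a10 a11 n (kv * 0)) / a4)) by (apply Rdiv_lt_0_compat; lra).
    lra. }
  assert (Hf1 : 0 < f (a1/a3)).
  { unfold f. specialize (Hg (a1/a3) (Rlt_le _ _ Ha3)).
    set (G := a1 * (a9 * hill a10 a11 n (kv * (a1 / a3))) / a4) in *.
    unfold Rdiv at 1. unfold Rdiv.
    assert (a1 * / (a3 + G) < a1 * / a3).
    { apply Rmult_lt_compat_l; auto. apply Rinv_lt_contravar; nra. }
    lra. }
  destruct (Ranalysis5.IVT_interv f 0 (a1/a3) Hc Ha3 Hf0 Hf1) as [z [Hz1 Hz2]].
  exists z. assert (z <> 0). { intro Hz. rewrite Hz in Hz2. lra. } unfold f in Hz2.
  split; lra.
Qed.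
Lemma cont_of_derive (f : R -> R) t l : is_derive f t l ->
  forall e, 0 < e -> exists d, 0 < d /\ forall s, Rabs (s - t) < d -> Rabs (f s - f t) < e.
Proof.
  intros Hd e He.
  assert (Hc : continuity_pt f t).
  { apply continuity_pt_filterlim. apply (ex_derive_continuous (K:=R_AbsRing) (V:=R_NormedModule) f). exists l; auto. }
  destruct (Hc e He) as [d [Hd1 Hd2]]. exists d. split; auto.
  intros s Hs. destruct (Req_dec s t) as [->|Hne].
  - rewrite Rminus_diag, Rabs_R0. auto.
  - apply (Hd2 s). split. split; [exact I| auto]. exact Hs.
Qed.


Lemma trap (V dV : R -> R) (kap L a : R) :
  0 < a -> 0 < kap ->
  (forall t, 0 < t -> is_derive V t (dV t)) ->
  (forall t, a <= t -> V t < L -> kap * V t + dV t <= 0) ->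
  (forall t, 0 <= V t) ->
  V a < L ->
  forall t, a <= t -> V t < L /\ exp (kap * t) * V t <= exp (kap * a) * V a.
Proof.
  intros Ha Hk HV Hneg Hpos HVa.
  set (W := fun t => exp (kap * t) * V t).
  set (dW := fun t => exp (kap * t) * (kap * V t + dV t)).
  assert (HW : forall t, 0 < t -> derivable_pt_lim W t (dW t)).
  { intros t Ht. apply is_derive_Reals. unfold W, dW.
    eapply is_derive_eq.
    - apply (is_derive_mult (fun t => exp (kap * t)) V).
      + apply (is_derive_comp exp (fun t => kap * t)). apply is_derive_exp.
        eapply is_derive_eq. apply is_derive_scal. apply is_derive_id. reflexivity.
      + apply HV; auto.
      + intros; simpl; unfold mult; simpl; ring.
    - simpl. unfold plus, mult, scal, one; simpl. unfold mult; simpl. ring. }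
  assert (Mono : forall b, a < b -> (forall s, a < s < b -> V s < L) -> W b <= W a).
  { intros b Hab Hin.
    destruct (MVT_cor2 W dW a b Hab) as [c [Hc1 Hc2]].
    { intros c Hc. apply HW. lra. }
    assert (dW c <= 0).
    { unfold dW. assert (0 < exp (kap * c)) by apply exp_pos.
      assert (kap * V c + dV c <= 0) by (apply Hneg; [lra | apply Hin; lra]).
      nra. }
    nra. }
  assert (Claim : forall t, a <= t -> V t < L).
  { intros t Ht. destruct (Rlt_or_le (V t) L) as [|HL]; auto. exfalso.
    set (E := fun u => a <= u /\ forall s, a <= s <= u -> V s < L).
    assert (Hb : bound E).
    { exists t. intros u [Hu1 Hu2]. destruct (Rle_or_lt u t); auto.
      specialize (Hu2 t). lra. }
    assert (He : exists u, E u).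
    { exists a. split; [lra|]. intros s Hs. replace s with a by lra. auto. }
    destruct (completeness E Hb He) as [m [Hub Hlub]].
    assert (Ham : a <= m) by (apply Hub; destruct He; split; [lra|]; intros s Hs; replace s with a by lra; auto).
    assert (Hbelow : forall s, a <= s < m -> V s < L).
    { intros s Hs. destruct (Rlt_or_le (V s) L) as [|HLs]; auto. exfalso.
      assert (m <= s); [|lra]. apply Hlub. intros u [Hu1 Hu2].
      destruct (Rle_or_lt u s); auto. specialize (Hu2 s). lra. }
    assert (Vm : V m < L).
    { destruct (Req_dec m a) as [->|Hne]; auto.
      assert (Wm : W m <= W a) by (apply Mono; [lra| intros s Hs; apply Hbelow; lra]).
      unfold W in Wm.
      assert (exp (kap * a) <= exp (kap * m)).
      { destruct (Req_dec a m); [subst; lra|]. left; apply exp_increasing. nra. }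
      assert (0 < exp (kap * m)) by apply exp_pos.
      specialize (Hpos a). nra. }
    destruct (cont_of_derive V m (dV m) (HV m ltac:(lra)) (L - V m) ltac:(lra)) as [d [Hd1 Hd2]].
    assert (E (m + d/2)).
    { split; [lra|]. intros s Hs. destruct (Rlt_or_le s m).
      - apply Hbelow; lra.
      - assert (Rabs (s - m) < d) by (rewrite Rabs_right; lra).
        specialize (Hd2 s H0). apply Rabs_def2 in Hd2. lra. }
    specialize (Hub _ H). lra. }
  intros t Ht. split; [apply Claim; auto|].
  destruct (Req_dec t a) as [->|Hne]; [lra|].
  apply (Mono t); [lra|]. intros s Hs; apply Claim; lra.
Qed.
Lemma core (p q k m B g d a6 c eps kap xi s ze phi : R) :
  0 < p -> 0 < m -> 0 < B -> 0 < g -> 0 < a6 -> 0 < kap ->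
  0 < (2*p)*(2*B*m) - (B*k - q)^2 ->
  g * d = c ->
  eps + kap*(1+B+g) <= ((2*p)*(2*B*m) - (B*k - q)^2)/(2*p+2*B*m) ->
  eps + kap*(1+B+g) <= 2*g*a6 ->
  0 <= eps ->
  Rabs (phi - c*ze) <= eps * Rabs ze ->
  2*xi*(-p*xi + q*s - phi) + 2*B*s*(-k*xi - m*s) + 2*g*ze*(d*xi - a6*ze)
   + kap*(xi^2 + B*s^2 + g*ze^2) <= 0.
Proof.
  intros Hp Hm HB Hg Ha6 Hk Hdet Hc H1 H2 He Hphi.
  set (aa := 2*p) in *. set (bb := B*k - q) in *. set (cc := 2*B*m) in *.
  set (lam := (aa*cc - bb^2)/(aa+cc)) in *.
  set (F := aa*xi^2 + 2*bb*xi*s + cc*s^2).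
  assert (Htr : 0 < aa + cc) by (unfold aa, cc; nra).
  assert (HF1 : (aa+cc)*F - (aa*cc - bb^2)*(xi^2+s^2) = (aa*xi + bb*s)^2 + (bb*xi+cc*s)^2)
    by (unfold F; ring).
  assert (HF : lam*(xi^2+s^2) <= F).
  { unfold lam. apply (Rmult_le_reg_l (aa+cc)); auto.
    replace ((aa + cc) * ((aa * cc - bb ^ 2) / (aa + cc) * (xi ^ 2 + s ^ 2)))
      with ((aa * cc - bb ^ 2) * (xi ^ 2 + s ^ 2)) by (field; lra).
    assert (0 <= (aa*xi + bb*s)^2) by apply pow2_ge_0. assert (0 <= (bb*xi + cc*s)^2) by apply pow2_ge_0. lra. }
  assert (Hx : 2*xi*(c*ze - phi) <= eps*(xi^2+ze^2)).
  { assert (Rabs (2*xi*(c*ze-phi)) <= eps*(xi^2+ze^2)).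
    { rewrite !Rabs_mult. rewrite (Rabs_right 2) by lra.
      replace (c*ze - phi) with (-(phi - c*ze)) by ring. rewrite Rabs_Ropp.
      assert (0 <= Rabs xi) by apply Rabs_pos.
      assert (2 * Rabs xi * Rabs (phi - c * ze) <= 2 * Rabs xi * (eps * Rabs ze)) by
        (apply Rmult_le_compat_l; lra).
      assert (Rabs xi ^2 = xi^2) by apply pow2_abs.
      assert (Rabs ze ^2 = ze^2) by apply pow2_abs.
      assert (0 <= Rabs ze) by apply Rabs_pos.
      assert (0 <= eps*(Rabs xi - Rabs ze)^2) by (apply Rmult_le_pos; [lra|apply pow2_ge_0]).
      assert (eps*(Rabs xi - Rabs ze)^2 = eps*(Rabs xi^2 + Rabs ze^2) - 2*Rabs xi*(eps*Rabs ze)) by ring.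
      rewrite H3, H4 in H7. lra. }
    pose proof (Rle_abs (2*xi*(c*ze-phi))). lra. }
  assert (HK : kap*(xi^2 + B*s^2 + g*ze^2) <= kap*(1+B+g)*(xi^2+s^2+ze^2)).
  { assert (0 <= xi^2) by nra. assert (0 <= s^2) by nra. assert (0 <= ze^2) by nra.
    rewrite Rmult_assoc. apply Rmult_le_compat_l; [lra|nra]. }
  assert (Hexp : 2*xi*(-p*xi + q*s - phi) + 2*B*s*(-k*xi - m*s) + 2*g*ze*(d*xi - a6*ze)
     = - F - 2*g*a6*ze^2 + 2*xi*(c*ze - phi)).
  { unfold F, aa, bb, cc. rewrite <- Hc. ring. }
  rewrite Hexp.
  assert (0 <= xi^2) by nra. assert (0 <= s^2) by nra. assert (0 <= ze^2) by nra.
  set (K := kap*(1+B+g)) in *.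
  nra.
Qed.
Lemma H_deriv a9 a10 a11 n vs : 0 < a9 -> 0 < a11 -> a11 < a10 -> (1 <= n)%nat -> 0 < vs ->
  exists Hp, 0 < Hp /\ is_derive (fun v => a9 * hill a10 a11 n v) vs Hp.
Proof.
  intros H9 H11 H10 Hn Hv.
  assert (0 < vs ^ n) by (apply pow_lt; auto).
  assert (0 < vs ^ pred n) by (apply pow_lt; auto).
  assert (0 < INR n) by (apply lt_0_INR; lia).
  exists (a9 * (INR n * vs^(pred n) * (a10 - a11)) / (1 + a11 * vs^n)^2).
  split.
  { apply Rdiv_lt_0_compat. apply Rmult_lt_0_compat; auto. apply Rmult_lt_0_compat; try lra. nra.
    nra. }
  unfold hill. auto_derive. nra.
  field. nra.
Qed.

Lemma isd_sq (f : R -> R) t l c : is_derive f t l -> is_derive (fun t => (f t - c)^2) t (2*(f t - c)*l).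
Proof.
  intros Hf. eapply is_derive_eq.
  apply (is_derive_pow (fun t => f t - c) 2). apply (is_derive_minus f (fun _ => c)). exact Hf.
  apply is_derive_const. simpl. unfold minus, plus, opp, zero; simpl. ring.
Qed.

Definition Vf (B g xs ys vs : R) (x y v : R -> R) (t : R) : R :=
  (x t - xs)^2 + B * ((x t + y t) - (xs + ys))^2 + g * (v t - vs)^2.

Definition dVf (fx fy fv : R -> R -> R -> R) (B g xs ys vs : R) (x y v : R -> R) (t : R) : R :=
  2*(x t - xs)*fx (x t) (y t) (v t)
  + B * (2*((x t + y t) - (xs + ys))*(fx (x t) (y t) (v t) + fy (x t) (y t) (v t)))
  + g * (2*(v t - vs)*fv (x t) (y t) (v t)).

Lemma Vf_deriv fx fy fv B g xs ys vs x y v :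
  is_sol fx fy fv x y v ->
  forall t, 0 < t -> is_derive (Vf B g xs ys vs x y v) t (dVf fx fy fv B g xs ys vs x y v t).
Proof.
  intros [Hd _] t Ht. destruct (Hd t Ht) as [Hx [Hy Hv]].
  unfold Vf, dVf.
  apply (is_derive_plus (fun t => (x t - xs)^2 + B * ((x t + y t) - (xs + ys))^2)
                        (fun t => g * (v t - vs)^2)).
  apply (is_derive_plus (fun t => (x t - xs)^2) (fun t => B * ((x t + y t) - (xs + ys))^2)).
  apply isd_sq; auto.
  apply (is_derive_scal (fun t => ((x t + y t) - (xs + ys))^2)).
  apply (isd_sq (fun t => x t + y t)). apply (is_derive_plus x y); auto.
  apply (is_derive_scal (fun t => (v t - vs)^2)). apply isd_sq; auto.
Qed.

Lemma right_close (f : R -> R) rho :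
  filterlim f (at_right 0) (locally (f 0)) -> 0 < rho ->
  exists d, 0 < d /\ forall a, 0 < a < d -> Rabs (f a - f 0) < rho.
Proof.
  intros Hf Hr.
  assert (Hb : locally (f 0) (ball (f 0) rho)) by (apply (locally_ball (f 0) (mkposreal rho Hr))).
  specialize (Hf _ Hb). destruct Hf as [e He].
  exists e. split. apply cond_pos.
  intros a [Ha1 Ha2]. apply He; auto.
  unfold ball; simpl. unfold AbsRing_ball, abs, minus, plus, opp; simpl.
  rewrite Ropp_0, Rplus_0_r, Rabs_right; lra.
Qed.

Definition Nd (xs ys vs : R) (x y v : R -> R) t :=
  (x t - xs)^2 + (y t - ys)^2 + (v t - vs)^2.

Lemma pick_a fx fy fv x y v xs ys vs rho T0 :
  is_sol fx fy fv x y v -> 0 < rho -> 0 < T0 ->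
  exists a, 0 < a < T0 /\ Nd xs ys vs x y v a <= 2 * Nd xs ys vs x y v 0 + 6 * rho^2.
Proof.
  intros [_ [Hx [Hy Hv]]] Hr HT.
  destruct (right_close x rho Hx Hr) as [dx [Hdx Hx']].
  destruct (right_close y rho Hy Hr) as [dy [Hdy Hy']].
  destruct (right_close v rho Hv Hr) as [dv [Hdv Hv']].
  set (a := Rmin (Rmin dx dy) (Rmin dv T0) / 2).
  assert (0 < Rmin (Rmin dx dy) (Rmin dv T0)) by (repeat apply Rmin_pos; auto).
  pose proof (Rmin_l (Rmin dx dy) (Rmin dv T0)). pose proof (Rmin_r (Rmin dx dy) (Rmin dv T0)).
  pose proof (Rmin_l dx dy). pose proof (Rmin_r dx dy). pose proof (Rmin_l dv T0). pose proof (Rmin_r dv T0).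
  exists a. split. unfold a; lra.
  assert (A1 := Hx' a ltac:(unfold a; lra)).
  assert (A2 := Hy' a ltac:(unfold a; lra)).
  assert (A3 := Hv' a ltac:(unfold a; lra)).
  unfold Nd.
  assert (forall u w c, Rabs (u - w) < rho -> (u - c)^2 <= 2*(w - c)^2 + 2*rho^2).
  { intros u w c Hu. apply Rabs_def2 in Hu. assert ((u-w)^2 <= rho^2) by nra. assert (0 <= ((w-c)-(u-w))^2) by apply pow2_ge_0. nra. }
  pose proof (H6 _ _ xs A1). pose proof (H6 _ _ ys A2). pose proof (H6 _ _ vs A3). lra.
Qed.
Lemma sqrt_lt_sq N dl : 0 <= N -> sqrt N < dl -> N < dl^2.
Proof. intros H0 H1. pose proof (sqrt_sqrt N H0). pose proof (sqrt_pos N). nra. Qed.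

Lemma sq_lt_abs a r : 0 < r -> a^2 < r^2 -> Rabs a < r.
Proof. intros Hr H. destruct (Rlt_or_le (Rabs a) r) as [|Hle]; auto.
  rewrite <- pow2_abs in H. pose proof (Rabs_pos a). nra. Qed.

Lemma rel_VN B g xi eta ze : 0 < B -> 0 < g ->
  let V := xi^2 + B*(xi+eta)^2 + g*ze^2 in
  0 <= V /\ V <= 3*(1+B+g)*(xi^2+eta^2+ze^2) /\ xi^2+eta^2+ze^2 <= (3 + 2/B + 1/g)*V
  /\ xi^2 <= V /\ g*ze^2 <= V.
Proof.
  intros HB Hg V.
  assert (0 <= xi^2) by apply pow2_ge_0. assert (0 <= eta^2) by apply pow2_ge_0.
  assert (0 <= ze^2) by apply pow2_ge_0. assert (0 <= (xi+eta)^2) by apply pow2_ge_0.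
  assert (0 <= (xi-eta)^2) by apply pow2_ge_0.
  assert (0 <= B*(xi+eta)^2) by nra. assert (0 <= g*ze^2) by nra.
  split; [unfold V; lra|]. split.
  { unfold V. assert ((xi+eta)^2 <= 2*xi^2 + 2*eta^2) by nra. nra. }
  split.
  { assert (Hs0 : (2/B) * (B*(xi+eta)^2) = 2*(xi+eta)^2) by (field; lra).
    assert (Hz0 : (1/g) * (g*ze^2) = ze^2) by (field; lra).
    assert (Hb1 : (2/B) * (B*(xi+eta)^2) <= (2/B)*V).
    { apply Rmult_le_compat_l. apply Rlt_le, Rdiv_lt_0_compat; lra. unfold V; lra. }
    assert (Hb2 : (1/g) * (g*ze^2) <= (1/g)*V).
    { apply Rmult_le_compat_l. apply Rlt_le, Rdiv_lt_0_compat; lra. unfold V; lra. }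
    assert (eta^2 <= 2*(xi+eta)^2 + 2*xi^2).
    { assert (0 <= (xi+eta+xi)^2) by apply pow2_ge_0. nra. }
    assert (xi^2 <= V) by (unfold V; lra).
    replace ((3 + 2/B + 1/g)*V) with (3*V + (2/B)*V + (1/g)*V) by ring. lra. }
  split; unfold V; lra.
Qed.

Lemma stab_gen (a1 a3 a4 d a6 : R) (H : R -> R) (xs ys vs Hp : R) :
  0 < a1 -> a1 < a3 -> 0 < a4 -> 0 < d -> 0 < a6 -> 0 < xs -> 0 <= H vs -> 0 < Hp ->
  is_derive H vs Hp ->
  a1 + (a4 - a1) * ys - (a3 + H vs) * xs = 0 ->
  H vs * xs - a4 * ys = 0 ->
  d * xs - a6 * vs = 0 ->
  loc_asym_stable (fun x y v => a1 + (a4 - a1) * y - (a3 + H v) * x)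
                  (fun x y v => H v * x - a4 * y)
                  (fun x y v => d * x - a6 * v) xs ys vs.
Proof.
  intros Ha1 Ha3 Ha4 Hd Ha6 Hxs HHs HHp HHd E1 E2 E3.
  set (fx := fun x y v => a1 + (a4 - a1) * y - (a3 + H v) * x).
  set (fy := fun x y v => H v * x - a4 * y).
  set (fv := fun x y v => d * x - a6 * v).
  set (k := a3 - a1). set (m := a1). set (q := a4 - a1). set (p := a4 + k + H vs).
  assert (Hk : 0 < k) by (unfold k; lra).
  assert (Hp0 : 0 < p) by (unfold p; lra).
  assert (Hqp : 0 < q*k + p*m).
  { replace (q*k + p*m) with (a4*k + a4*a1 + H vs * a1) by (unfold q, p, m; ring).
    assert (0 < a4*k) by nra. assert (0 < a4*a1) by nra. assert (0 <= H vs * a1) by nra. lra. }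
  assert (Hpm : 0 < p*m) by (unfold m; nra).
  set (B := (q*k + 2*p*m)/k^2).
  assert (HB : 0 < B) by (unfold B; apply Rdiv_lt_0_compat; nra).
  set (c := xs * Hp). set (g := c / d).
  assert (Hg : 0 < g) by (unfold g, c; apply Rdiv_lt_0_compat; nra).
  assert (Hgd : g * d = c) by (unfold g; field; lra).
  set (det := (2*p)*(2*B*m) - (B*k - q)^2).
  assert (Hdet : 0 < det).
  { replace det with (4*(p*m)*(q*k+p*m)/k^2).
    - apply Rdiv_lt_0_compat; nra.
    - unfold det, B. field. lra. }
  set (lam := det / (2*p + 2*B*m)).
  assert (Hlam : 0 < lam) by (unfold lam; apply Rdiv_lt_0_compat; unfold m in *; nra).
  set (rho := Rmin lam (2*g*a6)).
  assert (Hrho : 0 < rho) by (apply Rmin_pos; nra).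
  assert (Hrho1 : rho <= lam) by apply Rmin_l.
  assert (Hrho2 : rho <= 2*g*a6) by apply Rmin_r.
  set (eps := rho/2).
  set (Mb := 1 + B + g).
  assert (HMb: 0 < Mb) by (unfold Mb; lra).
  set (kap := rho / (2*Mb)).
  assert (Hkap : 0 < kap) by (unfold kap; apply Rdiv_lt_0_compat; lra).
  assert (Hek : eps + kap * Mb = rho) by (unfold eps, kap; field; lra).
  set (eps1 := eps / (2*(xs+1))).
  assert (Heps1 : 0 < eps1) by (unfold eps1, eps; apply Rdiv_lt_0_compat; lra).
  apply is_derive_Reals in HHd.
  destruct (HHd eps1 Heps1) as [d1 Hd1].
  assert (Hlin : forall v, Rabs (v - vs) < d1 -> Rabs (H v - H vs - Hp*(v - vs)) <= eps1 * Rabs (v - vs)).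
  { intros v Hv. destruct (Req_dec v vs) as [->|Hne].
    - replace (H vs - H vs - Hp * (vs - vs)) with 0 by ring. rewrite Rminus_diag, !Rabs_R0. lra.
    - assert (Hh : v - vs <> 0) by lra.
      specialize (Hd1 (v - vs) Hh Hv). replace (vs + (v - vs)) with v in Hd1 by ring.
      replace (H v - H vs - Hp * (v - vs)) with ((v - vs) * ((H v - H vs) / (v - vs) - Hp)) by (field; auto).
      rewrite Rabs_mult. rewrite (Rmult_comm eps1). apply Rmult_le_compat_l. apply Rabs_pos. lra. }
  assert (Hd1p : 0 < d1) by apply cond_pos.
  set (r1 := Rmin 1 (Rmin (d1/2) (eps/(2*Hp)))).
  assert (Hr1 : 0 < r1).
  { unfold r1. repeat apply Rmin_pos; try lra. apply Rdiv_lt_0_compat; unfold eps; lra. }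
  assert (Hr1a : r1 <= 1) by apply Rmin_l.
  assert (Hr1b : r1 <= d1/2) by (eapply Rle_trans; [apply Rmin_r|apply Rmin_l]).
  assert (Hr1c : r1 * Hp <= eps/2).
  { assert (r1 <= eps/(2*Hp)) by (eapply Rle_trans; [apply Rmin_r|apply Rmin_r]).
    replace (eps/2) with (eps/(2*Hp) * Hp) by (field; lra).
    apply Rmult_le_compat_r; lra. }
  assert (Hphi : forall X V0, Rabs (X - xs) < r1 -> Rabs (V0 - vs) < r1 ->
     Rabs (X * (H V0 - H vs) - c * (V0 - vs)) <= eps * Rabs (V0 - vs)).
  { intros X V0 HX HV.
    assert (HL := Hlin V0 ltac:(lra)).
    replace (X * (H V0 - H vs) - c * (V0 - vs)) with
      (X * (H V0 - H vs - Hp * (V0 - vs)) + (X - xs) * Hp * (V0 - vs)) by (unfold c; ring).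
    eapply Rle_trans. apply Rabs_triang.
    rewrite !Rabs_mult. rewrite (Rabs_right Hp) by lra.
    assert (HXa : Rabs X <= xs + 1).
    { replace X with (xs + (X - xs)) by ring. eapply Rle_trans. apply Rabs_triang.
      rewrite (Rabs_right xs) by lra. lra. }
    assert (0 <= Rabs (V0 - vs)) by apply Rabs_pos.
    assert (0 <= Rabs X) by apply Rabs_pos.
    assert (0 <= Rabs (X - xs)) by apply Rabs_pos.
    assert (T1 : Rabs X * Rabs (H V0 - H vs - Hp * (V0 - vs)) <= (xs+1) * (eps1 * Rabs (V0 - vs))).
    { apply Rmult_le_compat; auto. apply Rabs_pos. }
    assert (T2 : Rabs (X - xs) * Hp * Rabs (V0 - vs) <= r1 * Hp * Rabs (V0 - vs)).
    { apply Rmult_le_compat_r; auto. apply Rmult_le_compat_r; lra. }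
    assert (T3 : (xs+1)*eps1 = eps/2) by (unfold eps1; field; lra).
    assert (T4 : r1 * Hp * Rabs (V0 - vs) <= eps/2 * Rabs (V0 - vs)) by (apply Rmult_le_compat_r; lra).
    nra. }
  set (L := Rmin (r1^2) (g*r1^2)).
  assert (HL : 0 < L) by (unfold L; apply Rmin_pos; [apply pow_lt; lra| apply Rmult_lt_0_compat; [lra| apply pow_lt; lra]]).
  set (Mv := 3*Mb). set (Cn := 3 + 2/B + 1/g).
  assert (HMv : 0 < Mv) by (unfold Mv; lra).
  assert (HCn : 0 < Cn).
  { unfold Cn. assert (0 < 2/B) by (apply Rdiv_lt_0_compat; lra).
    assert (0 < 1/g) by (apply Rdiv_lt_0_compat; lra). lra. }
  assert (Rel : forall (x y v : R -> R) t,
    0 <= Vf B g xs ys vs x y v t /\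
    Vf B g xs ys vs x y v t <= Mv * Nd xs ys vs x y v t /\
    Nd xs ys vs x y v t <= Cn * Vf B g xs ys vs x y v t /\
    (x t - xs)^2 <= Vf B g xs ys vs x y v t /\ g * (v t - vs)^2 <= Vf B g xs ys vs x y v t).
  { intros x y v t.
    assert (Ev : Vf B g xs ys vs x y v t = (x t - xs)^2 + B*((x t - xs) + (y t - ys))^2 + g*(v t - vs)^2)
      by (unfold Vf; ring).
    rewrite Ev. unfold Nd, Mv, Mb, Cn. apply (rel_VN B g (x t - xs) (y t - ys) (v t - vs) HB Hg). }
  assert (Neg : forall (x y v : R -> R) t, Vf B g xs ys vs x y v t < L ->
     kap * Vf B g xs ys vs x y v t + dVf fx fy fv B g xs ys vs x y v t <= 0).
  { intros x y v t HVt.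
    destruct (Rel x y v t) as [_ [_ [_ [R1 R2]]]].
    assert (HX : Rabs (x t - xs) < r1).
    { apply sq_lt_abs; auto. assert (L <= r1^2) by apply Rmin_l. lra. }
    assert (HV : Rabs (v t - vs) < r1).
    { apply sq_lt_abs; auto. assert (L <= g*r1^2) by apply Rmin_r.
      apply (Rmult_lt_reg_l g); auto. lra. }
    set (X := x t) in *. set (Y := y t) in *. set (V0 := v t) in *.
    set (xi := X - xs). set (s := X + Y - (xs + ys)). set (ze := V0 - vs).
    set (phi := X * (H V0 - H vs)).
    assert (F1 : fx X Y V0 = -p*xi + q*s - phi).
    { transitivity ((a1 + (a4 - a1)*Y - (a3 + H V0)*X) - (a1 + (a4 - a1) * ys - (a3 + H vs) * xs)).
      rewrite E1. unfold fx. ring. unfold p, q, k, xi, s, phi. ring. }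
    assert (F2 : fx X Y V0 + fy X Y V0 = -k*xi - m*s).
    { transitivity ((a1 + (a4 - a1)*Y - (a3 + H V0)*X) + (H V0 * X - a4 * Y)
         - ((a1 + (a4 - a1) * ys - (a3 + H vs) * xs) + (H vs * xs - a4 * ys))).
      rewrite E1, E2. unfold fx, fy. ring. unfold k, m, xi, s. ring. }
    assert (F3 : fv X Y V0 = d*xi - a6*ze).
    { transitivity ((d * X - a6 * V0) - (d * xs - a6 * vs)). rewrite E3. unfold fv. ring.
      unfold xi, ze. ring. }
    assert (C := core p q k m B g d a6 c eps kap xi s ze phi Hp0 ltac:(unfold m; lra) HB Hg Ha6 Hkap
       Hdet Hgd ltac:(fold det; fold lam; fold Mb; lra) ltac:(fold Mb; lra) ltac:(unfold eps; lra)
       ltac:(apply Hphi; auto)).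
    unfold Vf, dVf. fold X Y V0. rewrite F2, F1, F3.
    eapply Rle_trans; [|exact C]. right. unfold xi, s, ze. ring. }
  assert (Trap : forall (x y v : R -> R) a, is_sol fx fy fv x y v -> 0 < a ->
     Vf B g xs ys vs x y v a < L ->
     forall t, a <= t -> Vf B g xs ys vs x y v t <= exp (kap * (a - t)) * Vf B g xs ys vs x y v a).
  { intros x y v a Hs Ha HVa t Ht.
    destruct (trap (Vf B g xs ys vs x y v) (dVf fx fy fv B g xs ys vs x y v) kap L a Ha Hkap
       (Vf_deriv fx fy fv B g xs ys vs x y v Hs) (fun t _ => Neg x y v t)
       (fun t => proj1 (Rel x y v t)) HVa t Ht) as [_ Hexp].
    replace (kap * (a - t)) with (kap * a + - (kap * t)) by ring. rewrite exp_plus.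
    assert (Hi : exp (kap * t) * exp (- (kap * t)) = 1) by (rewrite <- exp_plus; replace (kap * t + - (kap * t)) with 0 by ring; apply exp_0).
    assert (0 < exp (- (kap * t))) by apply exp_pos.
    replace (Vf B g xs ys vs x y v t) with (exp (- (kap * t)) * (exp (kap * t) * Vf B g xs ys vs x y v t))
      by (rewrite <- Rmult_assoc, (Rmult_comm (exp _)), Hi; ring).
    replace (exp (kap * a) * exp (- (kap * t)) * Vf B g xs ys vs x y v a) with
      (exp (- (kap * t)) * (exp (kap * a) * Vf B g xs ys vs x y v a)) by ring.
    apply Rmult_le_compat_l; lra. }
  unfold loc_asym_stable. split.
  - intros e He.
    set (Z := Rmin L (e^2/Cn) / (16*Mv)).
    assert (HZ : 0 < Z) by (unfold Z; apply Rdiv_lt_0_compat; [apply Rmin_pos; [lra| apply Rdiv_lt_0_compat; nra]| lra]).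
    set (dl := Rmin e (Rmin 1 Z)).
    assert (Hdl : 0 < dl) by (unfold dl; repeat apply Rmin_pos; lra).
    assert (Hdl1 : dl <= e) by apply Rmin_l.
    assert (Hdl2 : dl <= 1) by (eapply Rle_trans; [apply Rmin_r|apply Rmin_l]).
    assert (Hdl3 : dl <= Z) by (eapply Rle_trans; [apply Rmin_r|apply Rmin_r]).
    exists dl. split; auto.
    intros x y v Hs H0 t Ht.
    destruct (Req_dec t 0) as [->|Htn]; [lra|].
    assert (HN0 : Nd xs ys vs x y v 0 < dl^2).
    { apply sqrt_lt_sq; [|exact H0]. unfold Nd.
      assert (0 <= (x 0 - xs)^2) by apply pow2_ge_0.
      assert (0 <= (y 0 - ys)^2) by apply pow2_ge_0. assert (0 <= (v 0 - vs)^2) by apply pow2_ge_0. lra. }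
    destruct (pick_a fx fy fv x y v xs ys vs dl t Hs Hdl ltac:(lra)) as [a [Ha HNa]].
    destruct (Rel x y v a) as [P0 [P1 _]].
    assert (Hdl4 : dl^2 <= Z) by nra.
    assert (HVa : Vf B g xs ys vs x y v a <= Rmin L (e^2/Cn) / 2).
    { assert (Mv * Nd xs ys vs x y v a <= Mv * (8 * Z)) by (apply Rmult_le_compat_l; lra).
      replace (Rmin L (e^2/Cn) / 2) with (Mv * (8*Z)) by (unfold Z; field; lra). lra. }
    assert (Hmn : 0 < Rmin L (e^2/Cn)) by (apply Rmin_pos; [lra| apply Rdiv_lt_0_compat; nra]).
    assert (HVa1 : Vf B g xs ys vs x y v a < L) by (pose proof (Rmin_l L (e^2/Cn)); lra).
    assert (HVa2 : Vf B g xs ys vs x y v a < e^2/Cn) by (pose proof (Rmin_r L (e^2/Cn)); lra).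
    assert (HT := Trap x y v a Hs (proj1 Ha) HVa1 t ltac:(lra)).
    assert (exp (kap * (a - t)) <= 1).
    { rewrite <- exp_0. destruct (Req_dec (kap*(a-t)) 0) as [->|]; [lra|]. left; apply exp_increasing. nra. }
    assert (HVt : Vf B g xs ys vs x y v t <= Vf B g xs ys vs x y v a) by nra.
    destruct (Rel x y v t) as [_ [_ [HNt _]]].
    assert (HNt2 : Nd xs ys vs x y v t < e^2).
    { assert (Cn * Vf B g xs ys vs x y v a < Cn * (e^2/Cn)) by (apply Rmult_lt_compat_l; auto).
      replace (Cn * (e^2/Cn)) with (e^2) in H2 by (field; lra). nra. }
    unfold dist3. rewrite <- (sqrt_pow2 e) by lra. apply sqrt_lt_1_alt. split; [|exact HNt2].
    unfold Nd in HNt2. assert (0 <= (x t - xs)^2) by apply pow2_ge_0.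
    assert (0 <= (y t - ys)^2) by apply pow2_ge_0. assert (0 <= (v t - vs)^2) by apply pow2_ge_0. lra.
  - set (dA := Rmin 1 (L/(16*Mv))).
    assert (HdA : 0 < dA) by (unfold dA; apply Rmin_pos; [lra| apply Rdiv_lt_0_compat; lra]).
    assert (HdA1 : dA <= 1) by apply Rmin_l.
    assert (HdA2 : dA <= L/(16*Mv)) by apply Rmin_r.
    exists dA. split; auto.
    intros x y v Hs H0 e He.
    assert (HN0 : Nd xs ys vs x y v 0 < dA^2).
    { apply sqrt_lt_sq; [|exact H0]. unfold Nd.
      assert (0 <= (x 0 - xs)^2) by apply pow2_ge_0.
      assert (0 <= (y 0 - ys)^2) by apply pow2_ge_0. assert (0 <= (v 0 - vs)^2) by apply pow2_ge_0. lra. }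
    destruct (pick_a fx fy fv x y v xs ys vs dA 1 Hs HdA ltac:(lra)) as [a [Ha HNa]].
    destruct (Rel x y v a) as [P0 [P1 _]].
    assert (HdA4 : dA^2 <= L/(16*Mv)) by nra.
    assert (HVa : Vf B g xs ys vs x y v a < L).
    { assert (HH3 : Mv * Nd xs ys vs x y v a <= Mv * (8 * (L/(16*Mv)))) by (apply Rmult_le_compat_l; lra).
      replace (Mv * (8 * (L/(16*Mv)))) with (L/2) in HH3 by (field; lra). lra. }
    set (r := e^2/(Cn*L+1)).
    assert (Hr : 0 < r) by (unfold r; apply Rdiv_lt_0_compat; nra).
    exists (a + Rabs (ln r)/kap + 1).
    intros t Ht.
    assert (0 <= Rabs (ln r)/kap) by (apply Rmult_le_pos; [apply Rabs_pos| apply Rlt_le, Rinv_0_lt_compat; lra]).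
    assert (HT := Trap x y v a Hs (proj1 Ha) HVa t ltac:(lra)).
    assert (Hex : exp (kap * (a - t)) < r).
    { rewrite <- (exp_ln r Hr). apply exp_increasing.
      assert (kap * (a - t) <= kap * (- (Rabs (ln r)/kap) - 1)) by (apply Rmult_le_compat_l; lra).
      replace (kap * (- (Rabs (ln r)/kap) - 1)) with (- Rabs (ln r) - kap) in H2 by (field; lra).
      pose proof (Rle_abs (- ln r)). rewrite Rabs_Ropp in H3. lra. }
    assert (HVt : Vf B g xs ys vs x y v t <= r * L).
    { assert (0 <= exp (kap * (a - t))) by (left; apply exp_pos). nra. }
    destruct (Rel x y v t) as [_ [_ [HNt _]]].
    assert (Hrl : r * (Cn*L+1) = e^2) by (unfold r; field; nra).
    assert (HNt2 : Nd xs ys vs x y v t < e^2).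
    { assert (Cn * Vf B g xs ys vs x y v t <= Cn * (r * L)) by (apply Rmult_le_compat_l; lra). nra. }
    unfold dist3. rewrite <- (sqrt_pow2 e) by lra. apply sqrt_lt_1_alt. split; [|exact HNt2].
    unfold Nd in HNt2. assert (0 <= (x t - xs)^2) by apply pow2_ge_0.
    assert (0 <= (y t - ys)^2) by apply pow2_ge_0. assert (0 <= (v t - vs)^2) by apply pow2_ge_0. lra.
Qed.

Theorem mainTheorem6 :
  forall (kON kOFF kI alpha_p1 alpha_p2 gamma_p1 gamma_m2 alpha_m2I beta_m2A Tc vb : R)
         (n : nat),
    0 < kON -> 0 < kOFF -> 0 < kI -> 0 < alpha_p1 -> 0 < alpha_p2 ->
    0 < gamma_p1 -> 0 < gamma_m2 -> 0 < alpha_m2I -> 0 < beta_m2A -> 0 < Tc ->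
    1 < vb -> (1 <= n)%nat ->
    let a1 := kON in
    let a3 := kON + kOFF in
    let a4 := kI in
    let a5 := alpha_p1 in
    let a6 := gamma_p1 in
    let a7 := alpha_m2I in
    let a8 := gamma_m2 + alpha_p1 + alpha_p2 in
    let a9 := beta_m2A / vb in
    let a10 := vb / Tc ^ n in
    let a11 := 1 / Tc ^ n in
    let fx := Fx a1 a3 a4 a9 a10 a11 n in
    let fy := Fy a4 a9 a10 a11 n in
    let fv := Fv a5 a6 a7 a8 in
    (exists xs ys vs, 0 < xs /\ 0 < ys /\ 0 < vs /\
       fx xs ys vs = 0 /\ fy xs ys vs = 0 /\ fv xs ys vs = 0) /\
    (forall xs ys vs, 0 < xs -> 0 < ys -> 0 < vs ->
       fx xs ys vs = 0 -> fy xs ys vs = 0 -> fv xs ys vs = 0 ->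
       loc_asym_stable fx fy fv xs ys vs).
Proof.
  intros kON kOFF kI alpha_p1 alpha_p2 gamma_p1 gamma_m2 alpha_m2I beta_m2A Tc vb n
    H1 H2 H3 H4 H5 H6 H7 H8 H9 H10 H11 Hn a1 a3 a4 a5 a6 a7 a8 a9 a10 a11 fx fy fv.
  assert (HT : 0 < Tc ^ n) by (apply pow_lt; auto).
  assert (Ha9 : 0 < a9) by (unfold a9; apply Rdiv_lt_0_compat; lra).
  assert (Ha10 : 0 < a10) by (unfold a10; apply Rdiv_lt_0_compat; lra).
  assert (Ha11 : 0 < a11) by (unfold a11; apply Rdiv_lt_0_compat; lra).
  assert (Ha1011 : a11 < a10).
  { unfold a10, a11. unfold Rdiv. apply Rmult_lt_compat_r; [apply Rinv_0_lt_compat; auto| lra]. }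
  assert (Ha8 : 0 < a8) by (unfold a8; lra).
  set (d := a5 * (a7 / a8)).
  assert (Hd : 0 < d) by (unfold d, a5, a7; apply Rmult_lt_0_compat; [lra| apply Rdiv_lt_0_compat; lra]).
  split.
  - set (kv := d / a6).
    assert (Hkv : 0 < kv) by (unfold kv, a6; apply Rdiv_lt_0_compat; lra).
    destruct (exist_eq a1 a3 a4 a9 a10 a11 kv n ltac:(unfold a1; lra) ltac:(unfold a1, a3; lra)
       ltac:(unfold a4; lra) Ha9 Ha10 Ha11 Hkv) as [xs [Hxs Exs]].
    set (Hv := a9 * hill a10 a11 n (kv * xs)) in *.
    assert (HHv : 0 < Hv) by (unfold Hv; apply Rmult_lt_0_compat; auto; apply hill_pos; nra).
    assert (Ha4 : 0 < a4) by (unfold a4; lra).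
    assert (Ha1 : 0 < a1) by (unfold a1; lra).
    assert (Ha3 : 0 < a3) by (unfold a3; lra).
    assert (Hden : 0 < a3 + a1 * Hv / a4).
    { assert (0 < a1 * Hv / a4) by (apply Rdiv_lt_0_compat; nra). lra. }
    assert (Exs2 : xs * (a3 + a1 * Hv / a4) = a1).
    { rewrite Exs at 1. field. split; [lra| nra]. }
    exists xs, (Hv * xs / a4), (kv * xs).
    split; [auto|]. split; [apply Rdiv_lt_0_compat; nra|]. split; [nra|].
    split; [|split].
    + unfold fx, Fx. fold Hv.
      replace (a1 + (a4 - a1) * (Hv * xs / a4) - (a3 + Hv) * xs) with (a1 - xs * (a3 + a1 * Hv / a4))
        by (field; lra). lra.
    + unfold fy, Fy. fold Hv. field. lra.
    + unfold fv, Fv. fold d. unfold kv. field. unfold a6; lra.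
  - intros xs ys vs Hxs Hys Hvs E1 E2 E3.
    destruct (H_deriv a9 a10 a11 n vs Ha9 Ha11 Ha1011 Hn Hvs) as [Hp [HHp HHd]].
    apply (stab_gen a1 a3 a4 d a6 (fun v => a9 * hill a10 a11 n v) xs ys vs Hp);
      try (unfold a1, a3, a4, a6; lra); auto.
    + apply Rlt_le, Rmult_lt_0_compat; auto. apply hill_pos; lra.
Qed.
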